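(* Under the setting of Algorithm 2 with $f\in\mathcal{H}_k$ and invertible kernel matrices, let $X_n=(x_{(n-1)L+1},\dots,x_{nL})$ be the batch selected at round $n$ and $x^*\in\arg\max_{\mathcal{X}}f$. Then $$\frac1L\sum_{i=1}^L\big(f(x^* )-f(x_{(n-1)L+i})\big)\le2\|f\|_{\mathcal{H}_k}\sqrt{\frac{\operatorname{tr}(\operatorname{cov}_{n-1}(X_n,X_n))}{L}}.$$
   Context: Algorithm 2: $X_n$ maximizes over $X=(z_1,\dots,z_L)\in\mathcal{X}^L$ the quantity $\frac1L\sum_i m_{(n-1)L}(z_i)+\|f\|_{\mathcal{H}_k}\big(2\sqrt{\operatorname{tr}(\operatorname{cov}_{n-1}(X,X))/L}-\sqrt{\mathbf 1^T\operatorname{cov}_{n-1}(X,X)\mathbf 1/L^2}\big)$. Here $m_t(x)=\mathbf{k}_t(x)^T\mathbf{K}_t^{-1}\mathbf{f}_t$ with $\mathbf{k}_t(x)=[k(x,x_i)]_{i\le t}$, $\mathbf{K}_t=[k(x_i,x_j)]_{i,j\le t}$, $\mathbf{f}_t=[f(x_i)]_{i\le t}$; $\overline X_n=\{x_1,\dots,x_{nL}\}$; $\operatorname{cov}_n(X,X)=\mathbf{K}(X,X)-\mathbf{K}(\overline X_n,X)^T\mathbf{K}(\overline X_n,\overline X_n)^{-1}\mathbf{K}(\overline X_n,X)$, $\operatorname{cov}_0=\mathbf{K}(X,X)$. *)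

(* Defs.v *)
(* R is an arbitrary real closed field (covers the reals). *)
From HB Require Import structures.
From mathcomp Require Import all_boot all_order all_algebra.
Set Implicit Arguments. Unset Strict Implicit. Unset Printing Implicit Defensive.
Import Order.TTheory GRing.Theory Num.Theory.
Local Open Scope ring_scope.

Section GPUCB.
Variables (R : rcfType) (T : Type).

(* (H, ip) is a reproducing kernel Hilbert space of functions T -> R for k:
   a linear space of functions containing every k(.,z), with an inner product
   having the reproducing property, complete for the induced norm.
   (The RKHS of k is unique, so quantifying over all such (H, ip) is faithful.) *)
Definition is_RKHS (k : T -> T -> R) (H : (T -> R) -> Prop)
    (ip : (T -> R) -> (T -> R) -> R) : Prop :=
  (forall z, H (fun y => k y z)) /\
  (forall f g, H f -> H g -> H (fun t => f t + g t)) /\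
  (forall (a : R) f, H f -> H (fun t => a * f t)) /\
  (forall f g, H f -> H g -> ip f g = ip g f) /\
  (forall f g h, H f -> H g -> H h ->
      ip (fun t => f t + g t) h = ip f h + ip g h) /\
  (forall (a : R) f g, H f -> H g -> ip (fun t => a * f t) g = a * ip f g) /\
  (forall f, H f -> 0 <= ip f f) /\
  (forall f, H f -> ip f f = 0 -> forall t, f t = 0) /\
  (forall f z, H f -> ip f (fun y => k y z) = f z) /\
  (forall u : nat -> T -> R, (forall m, H (u m)) ->
     (forall e : R, 0 < e -> exists N, forall m p, (N <= m)%N -> (N <= p)%N ->
        ip (fun t => u m t - u p t) (fun t => u m t - u p t) < e) ->
     exists g, H g /\ forall e : R, 0 < e -> exists N, forall m, (N <= m)%N ->
        ip (fun t => u m t - g t) (fun t => u m t - g t) < e).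

Definition rkhs_norm (ip : (T -> R) -> (T -> R) -> R) (f : T -> R) : R :=
  Num.sqrt (ip f f).

(* Query points x_1, x_2, ... are represented 0-indexed: x 0, x 1, ...;
   \overline X_n = first n*L points. *)
Definition kmat (k : T -> T -> R) (x : nat -> T) (t : nat) : 'M[R]_t :=
  \matrix_(i < t, j < t) k (x i) (x j).

Definition kcross (k : T -> T -> R) (x : nat -> T) (t L : nat)
    (Z : 'I_L -> T) : 'M[R]_(t, L) :=
  \matrix_(i < t, j < L) k (x i) (Z j).

Definition post_mean (k : T -> T -> R) (x : nat -> T) (f : T -> R) (t : nat)
    (z : T) : R :=
  ((\row_(i < t) k (x i) z) *m invmx (kmat k x t) *m (\col_(i < t) f (x i))) 0 0.

(* cov_n(Z,Z) with t = n*L observed points; for t = 0 this is K(Z,Z). *)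
Definition post_cov (k : T -> T -> R) (x : nat -> T) (t L : nat)
    (Z : 'I_L -> T) : 'M[R]_L :=
  \matrix_(i < L, j < L) k (Z i) (Z j)
  - (kcross k x t Z)^T *m invmx (kmat k x t) *m kcross k x t Z.

(* acquisition function of Algorithm 2 at round n (B = ||f||_{H_k}) *)
Definition acq (k : T -> T -> R) (x : nat -> T) (f : T -> R) (B : R)
    (L n : nat) (Z : 'I_L -> T) : R :=
  let C := post_cov k x (n.-1 * L) Z in
  (L%:R)^-1 * \sum_(i < L) post_mean k x f (n.-1 * L) (Z i)
  + B * (2 * Num.sqrt (\tr C / L%:R)
         - Num.sqrt ((((const_mx 1 : 'rV[R]_L) *m C *m (const_mx 1 : 'cV[R]_L)) 0 0)
                     / (L%:R ^+ 2))).

Definition batch (x : nat -> T) (L n : nat) : 'I_L -> T :=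
  fun i => x (n.-1 * L + i)%N.

End GPUCB.

Arguments kcross {R T} k x t L Z.
Arguments post_cov {R T} k x t L Z.
Arguments acq {R T} k x f B L n Z.
Arguments batch {T} x L n i.

(* Main.v *)
Require Import Defs.
From HB Require Import structures.
From mathcomp Require Import all_boot all_order all_algebra.
From mathcomp Require Import ring lra.
From Stdlib Require Import FunctionalExtensionality.
Import Order.TTheory GRing.Theory Num.Theory.
Local Open Scope ring_scope.

Set Implicit Arguments. Unset Strict Implicit.

Section Core.
Variables (R : rcfType) (T : Type) (k : T -> T -> R)
  (H : (T -> R) -> Prop) (ip : (T -> R) -> (T -> R) -> R).
Hypothesis hR : is_RKHS k H ip.

Lemma Hk z : H (fun y => k y z). Proof. by case: hR. Qed.
Lemma Hadd f g : H f -> H g -> H (fun t => f t + g t).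
Proof. have [h1 [h2 [h3 [h4 [h5 [h6 [h7 [h8 [h9 h10]]]]]]]]] := hR. exact: h2. Qed.
Lemma Hscale (a : R) f : H f -> H (fun t => a * f t).
Proof. have [h1 [h2 [h3 [h4 [h5 [h6 [h7 [h8 [h9 h10]]]]]]]]] := hR. exact: h3. Qed.
Lemma ipC f g : H f -> H g -> ip f g = ip g f.
Proof. have [h1 [h2 [h3 [h4 [h5 [h6 [h7 [h8 [h9 h10]]]]]]]]] := hR. exact: h4. Qed.
Lemma ipDl f g h : H f -> H g -> H h ->
      ip (fun t => f t + g t) h = ip f h + ip g h.
Proof. have [h1 [h2 [h3 [h4 [h5 [h6 [h7 [h8 [h9 h10]]]]]]]]] := hR. exact: h5. Qed.
Lemma ipZl (a : R) f g : H f -> H g -> ip (fun t => a * f t) g = a * ip f g.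
Proof. have [h1 [h2 [h3 [h4 [h5 [h6 [h7 [h8 [h9 h10]]]]]]]]] := hR. exact: h6. Qed.
Lemma ip_ge0 f : H f -> 0 <= ip f f.
Proof. have [h1 [h2 [h3 [h4 [h5 [h6 [h7 [h8 [h9 h10]]]]]]]]] := hR. exact: h7. Qed.
Lemma ip_eq0 f : H f -> ip f f = 0 -> forall t, f t = 0.
Proof. have [h1 [h2 [h3 [h4 [h5 [h6 [h7 [h8 [h9 h10]]]]]]]]] := hR. exact: h8. Qed.
Lemma ip_repr f z : H f -> ip f (fun y => k y z) = f z.
Proof. have [h1 [h2 [h3 [h4 [h5 [h6 [h7 [h8 [h9 h10]]]]]]]]] := hR. exact: h9. Qed.

Lemma ksym a b : k a b = k b a.
Proof.
rewrite -[LHS](ip_repr a (Hk b)) -[RHS](ip_repr b (Hk a)).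
by apply: ipC; apply: Hk.
Qed.

Lemma H0 f : H f -> H (fun _ => 0).
Proof.
move=> Hf; have E : (fun t => 0 * f t) = (fun _ : T => 0 : R).
  by apply: functional_extensionality => t; rewrite mul0r.
by rewrite -E; apply: Hscale.
Qed.

Lemma ip0l f g : H f -> H g -> ip (fun _ => 0) g = 0.
Proof.
move=> Hf Hg; have E : (fun t => 0 * f t) = (fun _ : T => 0 : R).
  by apply: functional_extensionality => t; rewrite mul0r.
by rewrite -E ipZl // mul0r.
Qed.

Definition lc m (c : 'I_m -> R) (p : 'I_m -> T) : T -> R :=
  fun y => \sum_(i < m) c i * k y (p i).
Arguments lc {m}.

Lemma lc_rec m (c : 'I_m.+1 -> R) p :
  lc c p = fun y => lc (fun i => c (widen_ord (leqnSn m) i))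
                       (fun i => p (widen_ord (leqnSn m) i)) y
                    + c ord_max * k y (p ord_max).
Proof. by apply: functional_extensionality => y; rewrite /lc big_ord_recr. Qed.

Lemma lc0 (c : 'I_0 -> R) p : lc c p = fun _ => 0.
Proof. by apply: functional_extensionality => y; rewrite /lc big_ord0. Qed.

Lemma Hlc f m c p : H f -> H (@lc m c p).
Proof.
move=> Hf; elim: m c p => [|m IH] c p; first by rewrite lc0; apply: H0 Hf.
rewrite lc_rec; apply: Hadd; first exact: IH.
by apply: Hscale; apply: Hk.
Qed.

Lemma ip_lc f m c p : H f -> ip (@lc m c p) f = \sum_(i < m) c i * f (p i).
Proof.
move=> Hf; elim: m c p => [|m IH] c p.
  by rewrite lc0 big_ord0; exact: (ip0l Hf Hf).
rewrite lc_rec ipDl //. all: try (exact: (Hlc _ _ Hf)). all: try (by apply: Hscale; apply: Hk).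
rewrite IH big_ord_recr /= ipZl //; last exact: Hk.
by rewrite ipC ?ip_repr //; apply: Hk.
Qed.

Lemma CS f g : H f -> H g -> ip f g ^+ 2 <= ip f f * ip g g.
Proof.
move=> Hf Hg.
have gg0 := ip_ge0 Hg; have ff0 := ip_ge0 Hf.
case: (eqVneq (ip g g) 0) => [gg|ggn].
  have E : g = fun _ => 0 by apply: functional_extensionality; apply: ip_eq0.
  by rewrite gg mulr0 ipC // E (ip0l Hf Hf) expr0n.
have ggp : 0 < ip g g by rewrite lt0r ggn.
set s := - ip f g / ip g g.
have hs : s * ip g g = - ip f g by rewrite /s -mulrA mulVf // mulr1.
have Hsg := Hscale s Hg.
have Hh := Hadd Hf Hsg.
have := ip_ge0 Hh.
set h := (fun t => f t + s * g t).
have e1 : ip h h = ip f h + ip (fun t => s * g t) h := ipDl Hf Hsg Hh.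
have e2 : ip h f = ip f f + ip (fun t => s * g t) f := ipDl Hf Hsg Hf.
have e3 : ip h g = ip f g + ip (fun t => s * g t) g := ipDl Hf Hsg Hg.
rewrite e1 (ipC Hf Hh) (ipZl _ Hg Hh) (ipC Hg Hh) e2 e3.
rewrite (ipZl _ Hg Hf) (ipZl _ Hg Hg) (ipC Hg Hf) => h0.
have h1 := mulr_ge0 gg0 h0.
have E : ip g g * (ip f f + s * ip f g + s * (ip f g + s * ip g g))
   = ip f f * ip g g + 2 * (s * ip g g) * ip f g + (s * ip g g) ^+ 2 by ring.
rewrite E hs in h1.
rewrite -subr_ge0; move: h1.
have -> : ip f f * ip g g + 2 * - ip f g * ip f g + (- ip f g) ^+ 2
   = ip f f * ip g g - ip f g ^+ 2 by ring.
done.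
Qed.

Lemma CSabs f g : H f -> H g ->
  `|ip f g| <= Num.sqrt (ip f f) * Num.sqrt (ip g g).
Proof.
move=> Hf Hg; rewrite -sqrtrM ?ip_ge0 // -sqrtr_sqr.
by apply: ler_wsqrtr; apply: CS.
Qed.


Lemma key f (x : nat -> T) t L (Z : 'I_L -> T) (wr : 'rV[R]_L) :
  H f -> kmat k x t \in unitmx ->
  `|\sum_(i < L) wr 0 i * (f (Z i) - post_mean k x f t (Z i))|
     <= Num.sqrt (ip f f) * Num.sqrt ((wr *m post_cov k x t L Z *m wr^T) 0 0)
  /\ 0 <= (wr *m post_cov k x t L Z *m wr^T) 0 0.
Proof.
move=> Hf Ku.
set K := kmat k x t; set P := invmx K; set Kc := kcross k x t L Z.
set Kzz := (\matrix_(i < L, j < L) k (Z i) (Z j) : 'M[R]_L).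
set ar := wr *m Kc^T *m P.
set lw := lc (fun i => wr 0 i) Z.
set la := lc (fun j : 'I_t => ar 0 j) (fun j : 'I_t => x j).
have Hlw : H lw := Hlc _ _ Hf.
have Hla : H la := Hlc _ _ Hf.
have Hsa := Hscale (-1) Hla.
set g := fun y => lw y + (-1) * la y.
have Hg : H g := Hadd Hlw Hsa.
have E1 : ip f g = \sum_(i < L) wr 0 i * (f (Z i) - post_mean k x f t (Z i)).
  rewrite (ipC Hf Hg).
  have -> : ip g f = ip lw f + ip (fun y => -1 * la y) f := ipDl Hlw Hsa Hf.
  rewrite (ipZl _ Hla Hf) /lw /la !ip_lc //.
  set fcol := (\col_(i < t) f (x i) : 'cV[R]_t).
  have -> : \sum_(j < t) ar 0 j * f (x j) = (ar *m fcol) 0 0.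
    by rewrite mxE; apply: eq_bigr => j _; rewrite [fcol j 0]mxE.
  rewrite /ar -!mulmxA mxE mulN1r.
  rewrite [RHS](eq_bigr _ (fun i _ => mulrBr _ _ _)) sumrB; congr (_ - _); apply: eq_bigr => i _.
  rewrite /post_mean -mulmxA !mxE; congr (_ * _).
  by apply: eq_bigr => l _; rewrite !mxE.
have E2 : ip g g = (wr *m post_cov k x t L Z *m wr^T) 0 0.
  have -> : ip g g = ip lw g + ip (fun y => -1 * la y) g := ipDl Hlw Hsa Hg.
  rewrite (ipZl _ Hla Hg) /lw /la !ip_lc //.
  have gZ : forall i, g (Z i) = (Kzz *m wr^T - Kc^T *m ar^T) i 0.
    move=> i; rewrite /g /lw /la /lc !mxE mulN1r; congr (_ - _).
      by apply: eq_bigr => l _; rewrite !mxE mulrC.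
    by apply: eq_bigr => l _; rewrite !mxE mulrC ksym.
  have gX : forall j : 'I_t, g (x j) = (Kc *m wr^T - K *m ar^T) j 0.
    move=> j; rewrite /g /lw /la /lc !mxE mulN1r; congr (_ - _).
      by apply: eq_bigr => l _; rewrite !mxE mulrC.
    by apply: eq_bigr => l _; rewrite !mxE mulrC.
  under eq_bigr do rewrite gZ.
  under [X in _ + _ * X = _]eq_bigr do rewrite gX.
  have -> : \sum_(i < L) wr 0 i * (Kzz *m wr^T - Kc^T *m ar^T) i 0
     = (wr *m (Kzz *m wr^T - Kc^T *m ar^T)) 0 0 by rewrite mxE.
  have -> : \sum_(i < t) ar 0 i * (Kc *m wr^T - K *m ar^T) i 0
     = (ar *m (Kc *m wr^T - K *m ar^T)) 0 0 by rewrite mxE.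
  have mxB11 : forall (A B : 'M[R]_(1,1)), A 0 0 + - 1 * B 0 0 = (A - B) 0 0.
    by move=> A B; rewrite !mxE mulN1r.
  rewrite mxB11; congr (fun_of_matrix _ 0 0).
  have arK : ar *m K = wr *m Kc^T by rewrite /ar -mulmxA /P mulVmx // mulmx1.
  rewrite /post_cov -/Kc -/K -/Kzz -/P.
  rewrite !mulmxBr !mulmxBl !mulmxA arK /ar.
  by rewrite opprB addrA subrK.
rewrite -E1 -E2; split; last exact: ip_ge0.
exact: CSabs.
Qed.

End Core.

Unset Implicit Arguments. Set Strict Implicit.
Lemma const_mul (R : comPzRingType) m n p (a b : R) :
  (const_mx a : 'M_(m, n)) *m (const_mx b : 'M_(n, p)) = const_mx (a * b * n%:R).
Proof.
apply/matrixP => i j; rewrite !mxE.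
under eq_bigr do rewrite !mxE.
by rewrite sumr_const card_ord mulr_natr.
Qed.

Lemma tr_const (R : comPzRingType) L (a : R) : \tr (const_mx a : 'M_L) = a * L%:R.
Proof.
rewrite /mxtrace; under eq_bigr do rewrite mxE.
by rewrite sumr_const card_ord mulr_natr.
Qed.

Theorem mainTheorem12 (R : rcfType) (T : Type) (k : T -> T -> R)
    (H : (T -> R) -> Prop) (ip : (T -> R) -> (T -> R) -> R)
    (f : T -> R) (L : nat) (x : nat -> T) (n : nat) (xstar : T) :
  is_RKHS k H ip -> H f ->
  (0 < L)%N -> (0 < n)%N ->
  (forall j, (j < n)%N -> kmat k x (j * L) \in unitmx) ->
  (forall r, (0 < r)%N -> (r <= n)%N -> forall Z : 'I_L -> T,
     acq k x f (rkhs_norm ip f) L r Z <= acq k x f (rkhs_norm ip f) L r (batch x L r)) ->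
  (forall z, f z <= f xstar) ->
  (L%:R)^-1 * \sum_(i < L) (f xstar - f (batch x L n i))
    <= 2 * rkhs_norm ip f
         * Num.sqrt (\tr (post_cov k x (n.-1 * L) L (batch x L n)) / L%:R).
Proof.
move=> hR Hf L0 n0 Ku Hacq _.
have Kt : kmat k x (n.-1 * L) \in unitmx by apply: Ku; rewrite prednK.
set t := (n.-1 * L)%N in Kt *.
set B := rkhs_norm ip f.
set X := batch x L n.
set Zs := (fun _ : 'I_L => xstar).
set Lr := (L%:R : R).
have Lr0 : 0 < Lr by rewrite ltr0n.
have Lrn0 : Lr != 0 by rewrite gt_eqF.
set one := (const_mx 1 : 'rV[R]_L).
have oneT : one^T = const_mx 1 by rewrite trmx_const.
have sumone : forall F : 'I_L -> R, \sum_(i < L) one 0 i * F i = \sum_(i < L) F i.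
  by move=> F; apply: eq_bigr => i _; rewrite mxE mul1r.
have [h1 q0] := @key R T k H ip hR f x t L X one Hf Kt.
rewrite sumone oneT sumrB in h1 q0.
set qX := ((one *m post_cov k x t L X *m const_mx 1) 0 0) in h1 q0.
set SX := \sum_(i < L) f (X i) in h1.
set MX := \sum_(i < L) post_mean k x f t (X i) in h1.
have i0 : 'I_L := Ordinal L0.
set c := post_cov k x t L Zs i0 i0.
have Cs : post_cov k x t L Zs = const_mx c.
  apply/matrixP => i j; rewrite [RHS]mxE /c /post_cov !mxE; congr (_ - _).
  apply: eq_bigr => l _; rewrite !mxE; congr (_ * _).
  by apply: eq_bigr => m _; rewrite !mxE.
have [h2 _] := @key R T k H ip hR f x t L Zs one Hf Kt.
rewrite sumone oneT Cs /one !const_mul mxE /Zs /= sumr_const card_ord in h2.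
set ms := post_mean k x f t xstar in h2.
have acqZ := Hacq n n0 (leqnn n) Zs.
rewrite /acq -/t -/B -/X Cs tr_const /one !const_mul mxE in acqZ.
rewrite /acq -/t -/B -/X -/one -/MX in acqZ.
rewrite -/qX in acqZ.
change (Num.sqrt (ip f f)) with B in h1. change (Num.sqrt (ip f f)) with B in h2.
have B0 : 0 <= B by apply: sqrtr_ge0.
rewrite -/Lr in h2 acqZ.
rewrite /Zs /= in acqZ. rewrite sumr_const card_ord -[_ *+ L]mulr_natl -/Lr mulKf // mulfK // in acqZ.
have e1 : 1 * c * Lr * 1 * Lr / Lr ^+ 2 = c by field.
rewrite e1 in acqZ.
have sqq : Num.sqrt (qX / Lr ^+ 2) = Num.sqrt qX * Lr^-1.
  rewrite sqrtrM // -exprVn sqrtr_sqr ger0_norm // invr_ge0; exact: ltW.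
rewrite sqq in acqZ.
have e2 : 1 * c * Lr * 1 * Lr = Lr ^+ 2 * c by ring.
rewrite e2 in h2.
rewrite sqrtrM ?exprn_ge0 ?(ltW Lr0) // sqrtr_sqr (ger0_norm (ltW Lr0)) in h2.
rewrite -[_ *+ L]mulr_natl -/Lr in h2.
move: h2; rewrite ler_norml => /andP [_ h2].
have h2' : f xstar - ms <= B * Num.sqrt c.
  by rewrite -(ler_pM2l Lr0) mulrCA.
move: h1; rewrite ler_norml => /andP [h1 _].
have u0 : 0 <= Lr^-1 by rewrite invr_ge0 ltW.
have h1' := ler_wpM2l u0 h1.
rewrite sumrB sumr_const card_ord -[_ *+ L]mulr_natl -/Lr -/SX mulrBr mulKf //.
rewrite /ms in h2'. lra.
Qed.
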